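(* Let $K$ be an algebraically closed field of characteristic $0$ and let $A=(A_{ij})_{i,j=1}^{n+1}$ be a block square matrix of order $2n+1$ with entries $a_{ij},b_{ij}\in K$ and blocks $A_{ij}=\begin{pmatrix} a_{ij}&b_{ij}\\ b_{ij}&a_{ij}\end{pmatrix}$ for $1\le i,j\le n$; $A_{i,n+1}=\begin{pmatrix}a_{i,n+1}\\ a_{i,n+1}\end{pmatrix}$ for $1\le i\le n$; $A_{n+1,j}=\begin{pmatrix}a_{n+1,j}&b_{n+1,j}\end{pmatrix}$ for $1\le j\le n$; and $A_{n+1,n+1}=a_{n+1,n+1}$. Let $S=(s_{ij})$ be the $(n+1)\times(n+1)$ matrix with $s_{ij}=a_{ij}+b_{ij}$ for $1\le i\le n+1$, $1\le j\le n$, and $s_{i,n+1}=a_{i,n+1}$ for $1\le i\le n+1$; and let $C=(c_{ij})$ be the $n\times n$ matrix with $c_{ij}=a_{ij}-b_{ij}$, $1\le i,j\le n$. Then $\sigma(A)=\sigma(S)\cup\sigma(C)$.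
   Context: $\sigma(X)$ denotes the spectrum of a square matrix $X$. *)

(* Defs.v *)
From mathcomp Require Import all_boot all_order all_algebra.
Set Implicit Arguments. Unset Strict Implicit. Unset Printing Implicit Defensive.
Import GRing.Theory.
Local Open Scope ring_scope.

Definition spectrum (F : fieldType) (m : nat) (X : 'M[F]_m) : pred F :=
  fun l => eigenvalue X l.

(* Block matrix A of order 2n+1. Entries a_{ij}, b_{ij} are indexed by
   'I_(n.+1) (0-based: block index n corresponds to the paper's n+1).
   Row/column r (0-based) with r < 2n lies in block r/2 at position r%2;
   row/column 2n is the last (1x1) block. *)
Definition blockA (F : fieldType) (n : nat) (a b : 'I_n.+1 -> 'I_n.+1 -> F)
  : 'M[F]_(n.*2.+1) :=
  \matrix_(r, c)
    let i : 'I_n.+1 := inord (r %/ 2) in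
    let j : 'I_n.+1 := inord (c %/ 2) in
    if (c : nat) == n.*2 then a i j
    else if odd r == odd c then a i j else b i j.

Definition matS (F : fieldType) (n : nat) (a b : 'I_n.+1 -> 'I_n.+1 -> F)
  : 'M[F]_(n.+1) :=
  \matrix_(i, j) (if j == ord_max then a i j else a i j + b i j).

Definition matC (F : fieldType) (n : nat) (a b : 'I_n.+1 -> 'I_n.+1 -> F)
  : 'M[F]_n :=
  \matrix_(i, j) (a (widen_ord (leqnSn n) i) (widen_ord (leqnSn n) j)
                  - b (widen_ord (leqnSn n) i) (widen_ord (leqnSn n) j)).

(* Main.v *)
Require Import Defs.
From mathcomp Require Import all_boot all_order all_algebra.
From mathcomp Require Import zify ring.
Set Implicit Arguments. Unset Strict Implicit. Unset Printing Implicit Defensive.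
Import GRing.Theory.
Local Open Scope ring_scope.
Lemma eig_tr (F : fieldType) m (X : 'M[F]_m) l : eigenvalue X^T l = eigenvalue X l.
Proof.
rewrite !eigenvalue_root_char; congr root; rewrite /char_poly -det_tr; congr (\det _).
by apply/matrixP => i j; rewrite !mxE eq_sym.
Qed.

Lemma eig_col (F : fieldType) m (X : 'M[F]_m) l :
  eigenvalue X l <-> exists2 x : 'cV_m, X *m x = l *: x & x != 0.
Proof.
rewrite -eig_tr; split.
  move/eigenvalueP => [v Hv Hv0]; exists v^T.
    by rewrite -[X]trmxK -trmx_mul Hv linearZ.
  by rewrite trmx_eq0.
move=> [x Hx Hx0]; apply/eigenvalueP; exists x^T.
  by rewrite -trmx_mul Hx linearZ.
by rewrite trmx_eq0.
Qed.

Lemma half2 j : ((j.*2) %/ 2 = j)%N. Proof. lia. Qed.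
Lemma half2S j : ((j.*2.+1) %/ 2 = j)%N. Proof. lia. Qed.
Section S.
Variable K : fieldType.
Variable n : nat.
Variables a b : 'I_n.+1 -> 'I_n.+1 -> K.
Local Notation N := (n.*2.+1).
Local Notation A := (blockA a b).

Lemma sum_nat_pairs (G : nat -> K) m :
  \sum_(0 <= k < m.*2) G k = \sum_(0 <= j < m) (G j.*2 + G j.*2.+1).
Proof.
elim: m => [|m IH]; first by rewrite !big_geq.
by rewrite doubleS !big_nat_recr //= ?IH ?addrA.
Qed.

Lemma sum_pairs (F : 'I_N -> K) : \sum_c F c =
  \sum_(j < n) (F (inord j.*2) + F (inord j.*2.+1)) + F (inord n.*2).
Proof.
rewrite (eq_bigr (fun c : 'I_N => F (inord c))); last by move=> c _; rewrite inord_val.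
rewrite -(big_mkord xpredT (fun k => F (inord k))) big_nat_recr //= sum_nat_pairs.
by rewrite big_mkord.
Qed.

Lemma widenE (h : (n <= n.+1)%N) (i : 'I_n) : widen_ord h i = inord i.
Proof. by apply/val_inj; rewrite /= inordK //; have := ltn_ord i; lia. Qed.

Lemma ord_maxE : (ord_max : 'I_n.+1) = inord n.
Proof. by apply/val_inj; rewrite /= inordK. Qed.

Lemma AE r k : (r < N)%N -> (k < N)%N -> A (inord r) (inord k) =
  if k == n.*2 then a (inord (r %/ 2)) (inord (k %/ 2))
  else if odd r == odd k then a (inord (r %/ 2)) (inord (k %/ 2))
  else b (inord (r %/ 2)) (inord (k %/ 2)).
Proof. by move=> hr hk; rewrite mxE !inordK. Qed.

Lemma A_col2n r : (r < N)%N -> A (inord r) (inord n.*2) = a (inord (r %/ 2)) (inord n).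
Proof. by move=> hr; rewrite AE // eqxx (half2 n). Qed.

Lemma A_pair r j : (r < N)%N -> (j < n)%N ->
  A (inord r) (inord j.*2) + A (inord r) (inord j.*2.+1) =
  a (inord (r %/ 2)) (inord j) + b (inord (r %/ 2)) (inord j).
Proof.
move=> hr hj; rewrite AE //; last lia. rewrite AE //; last lia.
have -> : (j.*2 == n.*2) = false by apply/negbTE/eqP; lia.
have -> : (j.*2.+1 == n.*2) = false by apply/negbTE/eqP; lia.
rewrite (half2 j) (half2S j) odd_double /=; rewrite odd_double; case: (odd r) => /=; [exact: addrC | by []].
Qed.


Lemma A_ee i k : (i <= n)%N -> (k < n)%N -> A (inord i.*2) (inord k.*2) = a (inord i) (inord k).
Proof.
move=> hi hk; rewrite AE; try lia.
have -> : (k.*2 == n.*2) = false by apply/negbTE/eqP; lia.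
by rewrite !odd_double (half2 i) (half2 k).
Qed.
Lemma A_eo i k : (i <= n)%N -> (k < n)%N -> A (inord i.*2) (inord k.*2.+1) = b (inord i) (inord k).
Proof.
move=> hi hk; rewrite AE; try lia.
have -> : (k.*2.+1 == n.*2) = false by apply/negbTE/eqP; lia.
by rewrite /= !odd_double (half2 i) (half2S k).
Qed.
Lemma A_oe i k : (i < n)%N -> (k < n)%N -> A (inord i.*2.+1) (inord k.*2) = b (inord i) (inord k).
Proof.
move=> hi hk; rewrite AE; try lia.
have -> : (k.*2 == n.*2) = false by apply/negbTE/eqP; lia.
by rewrite /= !odd_double (half2S i) (half2 k).
Qed.
Lemma A_oo i k : (i < n)%N -> (k < n)%N -> A (inord i.*2.+1) (inord k.*2.+1) = a (inord i) (inord k).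
Proof.
move=> hi hk; rewrite AE; try lia.
have -> : (k.*2.+1 == n.*2) = false by apply/negbTE/eqP; lia.
by rewrite /= !odd_double (half2S i) (half2S k).
Qed.
Lemma A_e2n i : (i <= n)%N -> A (inord i.*2) (inord n.*2) = a (inord i) (inord n).
Proof. by move=> hi; rewrite A_col2n ?(half2 i) //; lia. Qed.
Lemma A_o2n i : (i < n)%N -> A (inord i.*2.+1) (inord n.*2) = a (inord i) (inord n).
Proof. by move=> hi; rewrite A_col2n ?(half2S i) //; lia. Qed.

Lemma ordE m j (h : (j < m.+1)%N) : Ordinal h = inord j.
Proof. by apply/val_inj; rewrite /= inordK. Qed.

Lemma inord_eq i j : (i <= n)%N -> (j <= n)%N -> ((inord i : 'I_n.+1) == inord j) = (i == j).
Proof. by move=> hi hj; rewrite -val_eqE /= !inordK. Qed.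

Lemma SE i j : (i <= n)%N -> (j <= n)%N -> matS a b (inord i) (inord j) =
  if j == n then a (inord i) (inord j) else a (inord i) (inord j) + b (inord i) (inord j).
Proof. by move=> hi hj; rewrite mxE ord_maxE inord_eq. Qed.

Lemma CE (i j : 'I_n) : matC a b i j = a (inord i) (inord j) - b (inord i) (inord j).
Proof. by rewrite mxE !widenE. Qed.

Lemma sumS (f : 'I_n.+1 -> K) : \sum_j f j = \sum_(i < n) f (inord i) + f (inord n).
Proof. by rewrite big_ord_recr /= ord_maxE; congr (_ + _); apply: eq_bigr => i _; rewrite widenE. Qed.

Local Notation YY y k := (y 0 (inord k : 'I_N)).
Section Row.
Variable l : K.
Variable y : 'rV[K]_N.
Hypothesis Hy : y *m A = l *: y.
Local Notation Y k := (y 0 (inord k : 'I_N)).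

Lemma E c : (c < N)%N -> \sum_(i < n) (Y i.*2 * A (inord i.*2) (inord c) + Y i.*2.+1 * A (inord i.*2.+1) (inord c)) + Y n.*2 * A (inord n.*2) (inord c) = l * Y c.
Proof.
move=> hc; have H := congr1 (fun z : matrix _ _ _ => z 0 (inord c : 'I_N)) Hy.
by rewrite /= !mxE sum_pairs in H.
Qed.

Lemma E_even j : (j < n)%N -> \sum_(i < n) (Y i.*2 * a (inord i) (inord j) + Y i.*2.+1 * b (inord i) (inord j)) + Y n.*2 * a (inord n) (inord j) = l * Y j.*2.
Proof.
move=> hj; rewrite -E; last lia.
rewrite A_ee //; congr (_ + _); apply: eq_bigr => i _; have := ltn_ord i => hi.
by rewrite A_ee ?A_oe //; lia.
Qed.

Lemma E_odd j : (j < n)%N -> \sum_(i < n) (Y i.*2 * b (inord i) (inord j) + Y i.*2.+1 * a (inord i) (inord j)) + Y n.*2 * b (inord n) (inord j) = l * Y j.*2.+1.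
Proof.
move=> hj; rewrite -E; last lia.
rewrite A_eo //; congr (_ + _); apply: eq_bigr => i _; have := ltn_ord i => hi.
by rewrite A_eo ?A_oo //; lia.
Qed.

Lemma E_last : \sum_(i < n) (Y i.*2 + Y i.*2.+1) * a (inord i) (inord n) + Y n.*2 * a (inord n) (inord n) = l * Y n.*2.
Proof.
rewrite -E //; rewrite A_e2n //; congr (_ + _); apply: eq_bigr => i _; have := ltn_ord i => hi.
by rewrite A_e2n ?A_o2n ?mulrDl //; lia.
Qed.

End Row.

Lemma ordN_cases (P : 'I_N -> Prop) : (forall k, (k < n)%N -> P (inord k.*2)) ->
  (forall k, (k < n)%N -> P (inord k.*2.+1)) -> P (inord n.*2) -> forall c, P c.
Proof.
move=> He Ho Hl c; rewrite -(inord_val c).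
move: (odd_double_half c) (ltn_ord c); case: (odd c) => /= <-; set k := c./2 => hk.
  by rewrite add1n; apply: Ho; lia.
rewrite add0n; case: (ltnP k n) => hk'; first exact: He.
by have -> : k = n by lia.
Qed.

Lemma ordn_cases (P : 'I_n.+1 -> Prop) : (forall k, (k < n)%N -> P (inord k)) -> P (inord n) -> forall c, P c.
Proof.
move=> H1 H2 c; rewrite -(inord_val c); case: (ltnP c n) => h; first exact: H1.
by have -> : (c : nat) = n by have := ltn_ord c; lia.
Qed.

Lemma dir3 l : eigenvalue A l -> eigenvalue (matS a b) l \/ eigenvalue (matC a b) l.
Proof.
move/eigenvalueP => [y Hy Hy0].
pose u : 'rV_(n.+1) := \row_(j < n.+1) (if (j:nat) == n then YY y n.*2 else YY y j.*2 + YY y j.*2.+1).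
have uE j : (j <= n)%N -> u 0 (inord j) = if j == n then YY y n.*2 else YY y j.*2 + YY y j.*2.+1.
  by move=> hj; rewrite mxE inordK.
case: (boolP (u == 0)) => [/eqP u0 | u0].
- right; apply/eigenvalueP.
  pose v : 'rV_n := \row_(k < n) YY y k.*2.
  have Yo k : (k < n)%N -> YY y k.*2.+1 = - YY y k.*2.
    move=> hk; have := uE k; rewrite u0 mxE ifF; last by apply/negbTE/eqP; lia.
    by move=> /(_ (ltnW hk)) /esym /eqP; rewrite addrC addr_eq0 => /eqP.
  have Yn : YY y n.*2 = 0 by have := uE n (leqnn n); rewrite u0 mxE eqxx.
  exists v.
  + apply/rowP => k; rewrite !mxE.
    rewrite -(E_even Hy (ltn_ord k)) Yn mul0r addr0; apply: eq_bigr => i _.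
    by rewrite CE mxE Yo // mulNr mulrBr.
  + apply: contra Hy0 => /eqP v0; apply/eqP/rowP; apply: ordN_cases => [k hk|k hk|];
      rewrite mxE.
    * by have := congr1 (fun z : matrix _ _ _ => z 0 (Ordinal hk)) v0; rewrite !mxE.
    * by rewrite Yo //; have := congr1 (fun z : matrix _ _ _ => z 0 (Ordinal hk)) v0; rewrite !mxE => ->; rewrite oppr0.
    * exact: Yn.
- left; apply/eigenvalueP; exists u => //; apply/rowP; apply: ordn_cases => [j hj|].
  + rewrite !mxE sumS.
    rewrite (eq_bigr (fun i : 'I_n => (YY y i.*2 + YY y i.*2.+1) * (a (inord i) (inord j) + b (inord i) (inord j)))); last first.
      move=> i _; have := ltn_ord i => hi; rewrite uE ?SE ?ifF //; try lia; by apply/negbTE/eqP; lia.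
    rewrite uE ?SE ?eqxx ?(ifF _ (_ : (j == n) = false)) //; try lia; try (by apply/negbTE/eqP; lia).
    have jn : (j == n) = false by apply/negbTE/eqP; lia.
    rewrite inordK ?jn; last lia.
    rewrite (mulrDr l) -(E_even Hy hj) -(E_odd Hy hj) addrACA -big_split; congr (_ + _).
      by apply: eq_bigr => i _; rewrite mulrDl !mulrDr [RHS]addrACA [X in _ = _ + X]addrC.
    by rewrite mulrDr.
  + rewrite !mxE sumS.
    rewrite (eq_bigr (fun i : 'I_n => (YY y i.*2 + YY y i.*2.+1) * a (inord i) (inord n))); last first.
      move=> i _; have := ltn_ord i => hi; rewrite uE ?SE ?eqxx ?ifF //; try lia; by apply/negbTE/eqP; lia.
    rewrite uE ?SE ?eqxx // inordK // eqxx. exact: (E_last Hy).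
Qed.

Lemma dir2 l : eigenvalue (matC a b) l -> eigenvalue A l.
Proof.
move/eigenvalueP => [v Hv Hv0]; apply/eigenvalueP.
pose W (j : nat) : K := oapp (fun k : 'I_n => v 0 k) 0 (insub j).
have WE (k : 'I_n) : W k = v 0 k by rewrite /W valK.
pose z : 'rV_N := \row_(r < N) (if (r:nat) == n.*2 then 0 else if odd r then - W (r %/ 2)%N else W (r %/ 2)%N).
have zE k : (k < n)%N -> YY z k.*2 = W k.
  move=> hk; rewrite mxE inordK; last lia.
  by rewrite ifF ?odd_double ?(half2 k) //; apply/negbTE/eqP; lia.
have zO k : (k < n)%N -> YY z k.*2.+1 = - W k.
  move=> hk; rewrite mxE inordK; last lia.
  by rewrite ifF /= ?odd_double ?(half2S k) //; apply/negbTE/eqP; lia.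
have zL : YY z n.*2 = 0 by rewrite mxE inordK ?eqxx.
have Cv (k : 'I_n) : \sum_(i < n) W i * (a (inord i) (inord k) - b (inord i) (inord k)) = l * W k.
  rewrite WE -(_ : (v *m matC a b) 0 k = l * v 0 k); last by rewrite Hv mxE.
  by rewrite mxE; apply: eq_bigr => i _; rewrite CE WE.
exists z.
- apply/rowP; apply: ordN_cases => [k hk|k hk|]; rewrite [LHS]mxE [RHS]mxE sum_pairs zL mul0r addr0.
  + rewrite zE // -(Cv (Ordinal hk)) /=; apply: eq_bigr => j _; have := ltn_ord j => hj.
    by rewrite zE // zO // A_ee ?A_oe //; try lia; rewrite mulrBr mulNr.
  + rewrite zO // mulrN -(Cv (Ordinal hk)) /= -sumrN; apply: eq_bigr => j _; have := ltn_ord j => hj.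
    by rewrite zE // zO // A_eo ?A_oo //; try lia; rewrite mulrBr opprB mulNr addrC.
  + rewrite mulr0; apply: big1 => j _; have := ltn_ord j => hj.
    by rewrite zE // zO // A_e2n ?A_o2n //; try lia; rewrite mulNr subrr.
- apply: contra Hv0 => /eqP z0; apply/eqP/rowP => k; rewrite [RHS]mxE -WE -(zE k (ltn_ord k)).
  by rewrite z0 mxE.
Qed.

Lemma dir1 l : eigenvalue (matS a b) l -> eigenvalue A l.
Proof.
move/eig_col => [x Hx Hx0]; apply/eig_col.
pose z : 'cV_N := \col_(r < N) x (inord (r %/ 2)%N) 0.
have zE k : (k < N)%N -> z (inord k) 0 = x (inord (k %/ 2)) 0 by move=> hk; rewrite mxE inordK.
exists z.
- apply/colP => r; rewrite [LHS]mxE [RHS]mxE sum_pairs.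
  have hr := ltn_ord r; rewrite -(inord_val r); set i := (r %/ 2)%N.
  have hi : (i <= n)%N by rewrite /i; lia.
  rewrite [in RHS]zE // -/i.
  rewrite -(_ : (matS a b *m x) (inord i) 0 = l * x (inord i) 0); last by rewrite Hx mxE.
  rewrite [RHS]mxE sumS; congr (_ + _).
    apply: eq_bigr => j _; have := ltn_ord j => hj.
    rewrite !zE ?(half2 j) ?(half2S j); try lia.
    by rewrite -mulrDl A_pair // SE ?ifF //; try lia; apply/negbTE/eqP; lia.
  by rewrite zE ?(half2 n) // A_col2n // SE ?eqxx.
- apply: contra Hx0 => /eqP z0; apply/eqP/colP => i.
  have := congr1 (fun w : matrix _ _ _ => w (inord (i : nat).*2) 0) z0.
  rewrite zE; last by have := ltn_ord i; lia.
  by rewrite (half2 i) inord_val !mxE.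
Qed.

End S.

Theorem theorem5 (K : closedFieldType) (charK0 : [pchar K] =i pred0)
  (n : nat) (a b : 'I_n.+1 -> 'I_n.+1 -> K) :
  forall l : K,
    spectrum (blockA a b) l <-> (spectrum (matS a b) l \/ spectrum (matC a b) l).
Proof.
move=> l; rewrite /spectrum; split; first exact: dir3.
by case; [apply: dir1 | apply: dir2].
Qed.
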